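(* Let $f:\{0,1\}^n\to\{0,1\}$ be a read-once DNF formula with $m$ terms, each containing exactly $n/m$ variables (so every variable occurs in exactly one term). Under unit costs ($c_i=1$ for all $i$) and an arbitrary probability vector $p\in(0,1)^n$, there is a non-adaptive strategy $S$ with $$\mathrm{cost}_{c,p}(f,S)\le \frac{n}{m}\cdot \mathsf{OPT}_{\mathcal A}(f,c,p).$$
   Context: Stochastic Boolean Function Evaluation (SBFE) setup: $f:\{0,1\}^n\to\{0,1\}$ is a known Boolean function, $c\in\mathbb{R}_{>0}^n$ a cost vector and $p\in(0,1)^n$ a probability vector. The unknown input $x\in\{0,1\}^n$ is random with independent coordinates and $\Pr(x_i=1)=p_i$. The value $x_i$ can only be learned by testing variable $i$, at cost $c_i$. A strategy tests variables sequentially until $f(x)$ is determined, i.e. until $f(x')=f(x)$ for every $x'$ agreeing with $x$ on all tested coordinates. An adaptive strategy is a decision tree (the next test may depend on previous outcomes); a non-adaptive strategy is a fixed permutation of $[n]$, with variables tested in that order until $f(x)$ is determined. $\mathrm{cost}_{c,p}(f,S)$ is the expected total cost of tests performed by $S$ for random $x$. $\mathsf{OPT}_{\mathcal A}(f,c,p)$ (resp. $\mathsf{OPT}_{\mathcal N}(f,c,p)$) is the minimum of $\mathrm{cost}_{c,p}(f,S)$ over all adaptive (resp. non-adaptive) strategies. A DNF formula is a disjunction of terms, each a conjunction of literals; it is read-once if no variable is negated and distinct terms contain disjoint sets of variables. *)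

(* Defs.v *)
From HB Require Import structures.
From mathcomp Require Import all_boot all_order all_algebra all_fingroup.
From mathcomp Require Import reals.
Set Implicit Arguments. Unset Strict Implicit. Unset Printing Implicit Defensive.
Import Order.TTheory GRing.Theory Num.Theory.
Local Open Scope ring_scope.

Section SBFE.
Variables (R : realType) (n : nat).

Definition input := {ffun 'I_n -> bool}.

Definition prob (p : 'I_n -> R) (x : input) : R :=
  \prod_(i < n) (if x i then p i else 1 - p i).

Definition determined (f : input -> bool) (T : {set 'I_n}) (x : input) : bool :=
  [forall y : input, [forall i in T, y i == x i] ==> (f y == f x)].

(* Adaptive strategies: decision trees; a node tests variable i and
   continues in the subtree selected by the outcome x_i. *)
Inductive dtree : Type :=
  | Leaf : dtree
  | Node : 'I_n -> dtree -> dtree -> dtree.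

Fixpoint dt_cost (f : input -> bool) (c : 'I_n -> R) (t : dtree)
    (T : {set 'I_n}) (x : input) : R :=
  match t with
  | Leaf => 0
  | Node i t0 t1 =>
      if determined f T x then 0
      else c i + dt_cost f c (if x i then t1 else t0) (i |: T) x
  end.

Fixpoint dt_correct (f : input -> bool) (t : dtree) (T : {set 'I_n})
    (x : input) : bool :=
  match t with
  | Leaf => determined f T x
  | Node i t0 t1 =>
      determined f T x || dt_correct f (if x i then t1 else t0) (i |: T) x
  end.

Definition adaptive_strategy (f : input -> bool) (t : dtree) : Prop :=
  forall x : input, dt_correct f t set0 x.

Definition cost_adaptive (f : input -> bool) (c : 'I_n -> R) (p : 'I_n -> R)
    (t : dtree) : R :=
  \sum_(x : input) prob p x * dt_cost f c t set0 x.

(* Non-adaptive strategy: a permutation s of [n]; variables are tested in the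
   order s 0, s 1, ... until f(x) is determined.  The j-th test (0-indexed) is
   performed iff f(x) is not determined by the first j tested variables. *)
Definition prefix (s : {perm 'I_n}) (j : nat) : {set 'I_n} :=
  [set s k | k : 'I_n & (k < j)%N].

Definition cost_nonadaptive (f : input -> bool) (c : 'I_n -> R) (p : 'I_n -> R)
    (s : {perm 'I_n}) : R :=
  \sum_(x : input) prob p x *
    \sum_(j < n) (if determined f (prefix s j) x then 0 else c (s j)).

End SBFE.

(* Monotone (read-once when terms are disjoint) DNF with m terms; term j is the
   conjunction of the (un-negated) variables in T j. *)
Definition dnf (n m : nat) (T : 'I_m -> {set 'I_n}) (x : input n) : bool :=
  [exists j : 'I_m, [forall i in T j, x i]].

Definition read_once (n m : nat) (T : 'I_m -> {set 'I_n}) : Prop :=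
  forall j1 j2 : 'I_m, j1 != j2 -> [disjoint T j1 & T j2].

(* Main.v *)
Require Import Defs.
From HB Require Import structures.
From mathcomp Require Import all_boot all_order all_algebra all_fingroup.
From mathcomp Require Import reals.
From mathcomp Require Import ring lra.
Set Implicit Arguments. Unset Strict Implicit. Unset Printing Implicit Defensive.
Import Order.TTheory GRing.Theory Num.Theory.
Local Open Scope ring_scope.

Section Basics.
Variables (R : realType) (n : nat).

Definition E (p' : 'I_n -> R) (F : input n -> R) : R :=
  \sum_(x : input n) prob p' x * F x.

Definition upd (p' : 'I_n -> R) (i : 'I_n) (b : bool) : 'I_n -> R :=
  fun k => if k == i then (if b then 1 else 0) else p' k.

Lemma prob_D1 (p' : 'I_n -> R) (i : 'I_n) (x : input n) : prob p' x = (if x i then p' i else 1 - p' i) *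
  \prod_(k < n | k != i) (if x k then p' k else 1 - p' k).
Proof. by rewrite /prob (bigD1 i). Qed.

Lemma prob_split (p' : 'I_n -> R) (i : 'I_n) (x : input n) : prob p' x =
  p' i * prob (upd p' i true) x + (1 - p' i) * prob (upd p' i false) x.
Proof.
rewrite (prob_D1 p' i) (prob_D1 (upd p' i true) i) (prob_D1 (upd p' i false) i).
have H : forall b, \prod_(k < n | k != i)
   (if x k then upd p' i b k else 1 - upd p' i b k) =
   \prod_(k < n | k != i) (if x k then p' k else 1 - p' k).
  by move=> b; apply: eq_bigr => k /negPf hk; rewrite /upd hk.
rewrite !H /upd eqxx.
case: (x i); ring.
Qed.

Lemma E_ext (p' : 'I_n -> R) (F G : input n -> R) : (forall x : input n, F x = G x) -> E p' F = E p' G.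
Proof. by move=> H; apply: eq_bigr => x _; rewrite H. Qed.

Lemma E_ext_supp (p' : 'I_n -> R) (F G : input n -> R) : (forall x : input n, prob p' x != 0 -> F x = G x) -> E p' F = E p' G.
Proof.
move=> H; apply: eq_bigr => x _; case: (eqVneq (prob p' x) 0) => [->|/H ->].
  by rewrite !mul0r.
by [].
Qed.

Lemma E_split (p' : 'I_n -> R) (i : 'I_n) (F : input n -> R) : E p' F =
  p' i * E (upd p' i true) F + (1 - p' i) * E (upd p' i false) F.
Proof.
rewrite /E !mulr_sumr -big_split /=; apply: eq_bigr => x _.
rewrite (prob_split p' i x); ring.
Qed.

Lemma prob_sum (p' : 'I_n -> R) : \sum_(x : input n) prob p' x = 1.
Proof.
rewrite /prob.
pose F := fun (i : 'I_n) (b : bool) => if b then p' i else 1 - p' i.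
have -> : \sum_(x : input n) \prod_(i < n) (if x i then p' i else 1 - p' i)
   = \sum_(x : {ffun 'I_n -> bool}) \prod_(i < n) F i (x i) by [].
rewrite -bigA_distr_bigA /=; apply: big1 => i _.
by rewrite big_bool /F /=; ring.
Qed.

Lemma E_const (p' : 'I_n -> R) (c : R) : E p' (fun _ => c) = c.
Proof. by rewrite /E -mulr_suml prob_sum mul1r. Qed.

Lemma E_add (p' : 'I_n -> R) (F G : input n -> R) : E p' (fun x => F x + G x) = E p' F + E p' G.
Proof. by rewrite /E -big_split; apply: eq_bigr => x _; rewrite mulrDr. Qed.

Lemma E_sub (p' : 'I_n -> R) (F G : input n -> R) : E p' (fun x => F x - G x) = E p' F - E p' G.
Proof.
rewrite /E -sumrB; apply: eq_bigr => x _; rewrite mulrBr //.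
Qed.

Lemma E_sum (p' : 'I_n -> R) (F : nat -> input n -> R) k :
  E p' (fun x => \sum_(j < k) F j x) = \sum_(j < k) E p' (F j).
Proof.
rewrite /E; under eq_bigr do rewrite mulr_sumr.
by rewrite exchange_big.
Qed.

Lemma prob_ge0 (p' : 'I_n -> R) (x : input n) : (forall k, 0 <= p' k <= 1) -> 0 <= prob p' x.
Proof.
move=> H; apply: prodr_ge0 => k _; case: (x k); have /andP[] := H k => //.
by move=> _ h; rewrite subr_ge0.
Qed.

Lemma E_le (p' : 'I_n -> R) (F G : input n -> R) : (forall k, 0 <= p' k <= 1) -> (forall x : input n, F x <= G x) ->
  E p' F <= E p' G.
Proof.
move=> Hp H; apply: ler_sum => x _; apply: ler_wpM2l; first exact: prob_ge0.
exact: H.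
Qed.

Lemma E_ge0 (p' : 'I_n -> R) (F : input n -> R) : (forall k, 0 <= p' k <= 1) -> (forall x : input n, 0 <= F x) -> 0 <= E p' F.
Proof.
move=> Hp H; apply: sumr_ge0 => x _; apply: mulr_ge0; [exact: prob_ge0|exact: H].
Qed.

Lemma prob_upd_eq0 (p' : 'I_n -> R) (i : 'I_n) (b : bool) (x : input n) : x i != b -> prob (upd p' i b) x = 0.
Proof.
move=> H; rewrite (prob_D1 _ i) /upd eqxx.
by case: (x i) b H => [] [] //= _; rewrite ?subrr mul0r.
Qed.

Lemma E_upd_ext (p' : 'I_n -> R) (i : 'I_n) (b : bool) (F G : input n -> R) : (forall x : input n, x i = b -> F x = G x) ->
  E (upd p' i b) F = E (upd p' i b) G.
Proof.
move=> H; apply: eq_bigr => x _; case: (eqVneq (x i) b) => [/H -> //|/prob_upd_eq0 ->].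
by rewrite !mul0r.
Qed.

Definition flip (i : 'I_n) (x : input n) : input n :=
  [ffun k => if k == i then ~~ x k else x k].

Lemma flipK i : involutive (flip i).
Proof.
move=> x; apply/ffunP => k; rewrite /flip !ffunE.
by case: (k == i) => //; rewrite negbK.
Qed.

Lemma prob_flip (p' : 'I_n -> R) (i : 'I_n) (x : input n) : prob (upd p' i true) (flip i x) = prob (upd p' i false) x.
Proof.
rewrite /prob; apply: eq_bigr => k _; rewrite /flip ffunE /upd.
case: (k == i) => //; case: (x k) => /=; ring.
Qed.

Definition indep i (F : input n -> R) := forall x, F (flip i x) = F x.

Lemma E_indep (p' : 'I_n -> R) (i : 'I_n) (F : input n -> R) : indep i F -> E p' F = E (upd p' i true) F.
Proof.
move=> H.
have E1 : E (upd p' i true) F = E (upd p' i false) F.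
  rewrite /E (reindex_inj (inv_inj (flipK i))) /=; apply: eq_bigr => x _.
  by rewrite prob_flip H.
by rewrite (E_split p' i F) -E1; ring.
Qed.

Lemma E_prod_indep (p' : 'I_n -> R) (g : input n -> R) (s : seq 'I_n) : uniq s -> (forall i, i \in s -> indep i g) ->
  E p' (fun x => g x * \prod_(i <- s) (x i)%:R) = E p' g * \prod_(i <- s) p' i.
Proof.
elim: s p' => [|i s IH] p' /=.
  by move=> _ _; rewrite big_nil mulr1; apply: E_ext => x; rewrite big_nil mulr1.
move=> /andP[his us] Hind.
rewrite big_cons (E_split _ i).
have -> : E (upd p' i false) (fun x => g x * \prod_(j <- (i :: s)) (x j)%:R) =
          E (upd p' i false) (fun _ => 0).
  apply: (@E_upd_ext p' i false) => x /= xi; by rewrite big_cons xi /= mul0r mulr0.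
have -> : E (upd p' i true) (fun x => g x * \prod_(j <- (i :: s)) (x j)%:R) =
          E (upd p' i true) (fun x => g x * \prod_(j <- s) (x j)%:R).
  apply: (@E_upd_ext p' i true) => x /= xi; by rewrite big_cons xi /= mul1r.
rewrite E_const IH //; last by move=> j js; apply: Hind; rewrite inE js orbT.
have Hi : indep i g by apply: Hind; exact: mem_head.
rewrite -(E_indep p' Hi).

have -> : \prod_(j <- s) upd p' i true j = \prod_(j <- s) p' j.
  rewrite big_seq [RHS]big_seq; apply: eq_bigr => j js; rewrite /upd.
  by case: eqP => // eji; move: his; rewrite -eji js.
ring.
Qed.

End Basics.

Section DNF.
Variables (R : realType) (n m : nat) (T : 'I_m -> {set 'I_n}) (p : 'I_n -> R).
Hypothesis Hro : read_once T.
Hypothesis Hcov : forall i : 'I_n, exists j : 'I_m, i \in T j.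
Hypothesis Hne : forall j : 'I_m, exists i, i \in T j.
Hypothesis Hp : forall i : 'I_n, 0 < p i < 1.

Lemma mem_disj (j1 j2 : 'I_m) (i : 'I_n) : i \in T j1 -> i \in T j2 -> j1 = j2.
Proof.
move=> h1 h2; case: (eqVneq j1 j2) => // ne.
by have := disjointFr (Hro ne) h1; rewrite h2.
Qed.

Definition q (p' : 'I_n -> R) (j : 'I_m) : R := \prod_(i in T j) p' i.
Definition Rq : rel 'I_m := fun a b => q p b <= q p a.
Definition ord := sort Rq (enum 'I_m).
Fixpoint Phi (l : seq 'I_m) : R :=
  if l is j :: l' then 1 + (1 - q p j) * Phi l' else 0.

Lemma Rq_trans : transitive Rq.
Proof. by move=> b a c h1 h2; rewrite /Rq (le_trans h2 h1). Qed.
Lemma Rq_total : total Rq.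
Proof. by move=> a b; rewrite /Rq le_total. Qed.
Lemma ord_sorted : sorted Rq ord.
Proof. exact: (sort_sorted Rq_total). Qed.
Lemma ord_uniq : uniq ord.
Proof. by rewrite sort_uniq enum_uniq. Qed.
Lemma mem_ord j : j \in ord.
Proof. by rewrite mem_sort mem_enum. Qed.

Lemma q_bnd (p' : 'I_n -> R) j : (forall k, 0 <= p' k <= 1) -> 0 <= q p' j <= 1.
Proof.
move=> H; apply/andP; split.
  by apply: prodr_ge0 => k _; case/andP: (H k).
by apply: prodr_ile1 => k _; exact: H.
Qed.

Lemma p_bnd k : 0 <= p k <= 1.
Proof. by case/andP: (Hp k) => h1 h2; rewrite !ltW. Qed.

Lemma Phi_ge0 l : 0 <= Phi l.
Proof.
elim: l => [|j l IH] //=; have /andP[h1 h2] := q_bnd j p_bnd.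
have : 0 <= (1 - q p j) * Phi l by apply: mulr_ge0 => //; rewrite subr_ge0.
lra.
Qed.

Lemma Phi_exch l j : sorted Rq l -> uniq l -> j \in l ->
  Phi l <= 1 + (1 - q p j) * Phi [seq a <- l | a != j].
Proof.
elim: l => [|a l IH] //= Hs /andP[anl ul].
rewrite inE => Hj; case: (eqVneq j a) => [eja|nja].
  subst j; rewrite ?eqxx /=.
  have -> : [seq a0 <- l | a0 != a] = l.
    apply/all_filterP/allP => b bl; apply/eqP => ba; by rewrite -ba bl in anl.
  by [].
have jl : j \in l by move: Hj; rewrite (negbTE nja).
rewrite ?(eq_sym a) ?nja /=.
have Hall := order_path_min Rq_trans Hs.
have qja : q p j <= q p a by have := allP Hall j jl.
have IH' := IH (path_sorted Hs) ul jl.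
set X := Phi [seq a0 <- l | a0 != j].
have /andP[qa0 qa1] := q_bnd a p_bnd; have /andP[qj0 qj1] := q_bnd j p_bnd.
have X0 : 0 <= X by apply: Phi_ge0.
have h1 : (1 - q p a) * Phi l <= (1 - q p a) * (1 + (1 - q p j) * X).
  by apply: ler_wpM2l => //; rewrite subr_ge0.
have h2 : (1 - q p a) * (1 - q p j) * X <= (1 - q p j) * (1 - q p a) * X.
  by rewrite (mulrC (1 - q p a)).
nra.
Qed.


Definition touched (S : {set 'I_n}) (j : 'I_m) : bool :=
  [exists i, (i \in T j) && (i \in S)].
Definition Psi (S : {set 'I_n}) (p' : 'I_n -> R) : R :=
  (\prod_(j < m) (if touched S j then 1 - q p' j else 1)) *
  Phi [seq j <- ord | ~~ touched S j].
Definition Good (S : {set 'I_n}) (p' : 'I_n -> R) :=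
  (forall k, k \in S -> p' k = 0 \/ p' k = 1) /\ (forall k, k \notin S -> p' k = p k).
Definition agrees (S : {set 'I_n}) (p' : 'I_n -> R) (x : input n) :=
  forall k, k \in S -> p' k = (x k)%:R.
Definition x0 (S : {set 'I_n}) (p' : 'I_n -> R) : input n :=
  [ffun k => if k \in S then p' k == 1 else true].

Lemma G_bnd (S : {set 'I_n}) (p' : 'I_n -> R) : Good S p' -> forall k, 0 <= p' k <= 1.
Proof.
move=> [H1 H2] k; case: (boolP (k \in S)) => kS.
  by case: (H1 k kS) => ->; rewrite ?lexx ?ler01.
by rewrite H2 // p_bnd.
Qed.

Lemma agree_supp (S : {set 'I_n}) (p' : 'I_n -> R) (x : input n) : Good S p' -> prob p' x != 0 -> agrees S p' x.
Proof.
move=> [H1 _] Hpr k kS; case: (H1 k kS) => e; move: Hpr; rewrite (prob_D1 _ k) e;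
  case: (x k) => //=; rewrite ?subrr ?mul0r ?eqxx //.
Qed.

Lemma agree_eq (S : {set 'I_n}) (p' : 'I_n -> R) (x y : input n) : agrees S p' x -> agrees S p' y -> forall k, k \in S -> x k = y k.
Proof.
move=> Hx Hy k kS; have := Hx k kS; rewrite (Hy k kS) => /eqP; rewrite eqr_nat.
by case: (x k); case: (y k).
Qed.

Lemma det_agree (S : {set 'I_n}) (x y : input n) : (forall k, k \in S -> x k = y k) ->
  determined (dnf T) S x -> determined (dnf T) S y.
Proof.
move=> Hxy /forallP Hd; apply/forallP => z; apply/implyP => /forallP Hz.
have Hzx : [forall i in S, z i == x i].
  apply/forallP => i; apply/implyP => iS; have := implyP (Hz i) iS; by rewrite Hxy.
have Hyx : [forall i in S, y i == x i].
  by apply/forallP => i; apply/implyP => iS; rewrite Hxy.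
have /eqP h1 := implyP (Hd z) Hzx; have /eqP h2 := implyP (Hd y) Hyx.
by rewrite h1 h2.
Qed.

Lemma x0_agrees (S : {set 'I_n}) (p' : 'I_n -> R) : Good S p' -> agrees S p' (x0 S p').
Proof.
move=> [H1 _] k kS; rewrite /x0 ffunE kS; case: (H1 k kS) => ->.
  by rewrite eq_sym oner_eq0.
by rewrite eqxx.
Qed.

Lemma Psi_det0 (S : {set 'I_n}) (p' : 'I_n -> R) (x : input n) : Good S p' -> agrees S p' x -> determined (dnf T) S x ->
  Psi S p' = 0.
Proof.
move=> HG Ha /forallP Hd; case Hfx: (dnf T x).
  pose y : input n := [ffun k => (k \in S) && x k].
  have Hy : [forall i in S, y i == x i].
    by apply/forallP => i; apply/implyP => iS; rewrite /y ffunE iS.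
  have := implyP (Hd y) Hy; rewrite Hfx => /eqP /existsP [j /forallP Hj].
  have Hjt : forall i, i \in T j -> (i \in S) && x i.
    by move=> i ij; have := implyP (Hj i) ij; rewrite /y ffunE.
  have tj : touched S j.
    case: (Hne j) => i ij; apply/existsP; exists i.
    by case/andP: (Hjt i ij) => -> _; rewrite ij.
  have qj : q p' j = 1.
    rewrite /q; apply: big1 => i ij; case/andP: (Hjt i ij) => iS xi.
    by rewrite (Ha i iS) xi.
  by rewrite /Psi (bigD1 j) //= tj qj subrr !mul0r.
pose y : input n := [ffun k => (k \in S) ==> x k].
have Hy : [forall i in S, y i == x i].
  by apply/forallP => i; apply/implyP => iS; rewrite /y ffunE iS.
have := implyP (Hd y) Hy; rewrite Hfx => /eqP /negbT /existsPn Hj.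
have Hall : forall j, touched S j.
  move=> j; have /forallPn [i] := Hj j; rewrite negb_imply => /andP[ij].
  rewrite /y ffunE negb_imply => /andP[iS _]; apply/existsP; exists i.
  by rewrite ij iS.
rewrite /Psi; have -> : [seq j <- ord | ~~ touched S j] = [::].
  by rewrite (eq_filter (a2 := pred0)) ?filter_pred0 // => j; rewrite Hall.
by rewrite /= mulr0.
Qed.

Lemma dt_cost_ge0 (t : dtree n) (S : {set 'I_n}) (x : input n) : 0 <= dt_cost (dnf T) (fun _ => (1 : R)) t S x.
Proof.
elim: t S => [|i t0 IH0 t1 IH1] S //=; case: ifP => _ //.
by apply: addr_ge0; [exact: ler01| case: (x i)].
Qed.


Lemma touched_U1 (S : {set 'I_n}) (i : 'I_n) j :
  touched (i |: S) j = (i \in T j) || touched S j.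
Proof.
apply/existsP/orP => [[k /andP[kj]]|[ij|/existsP[k /andP[kj kS]]]].
  rewrite in_setU1 => /orP[/eqP <-|kS]; first by left.
  by right; apply/existsP; exists k; rewrite kj.
  by exists i; rewrite ij setU11.
by exists k; rewrite kj in_setU1 kS orbT.
Qed.

Lemma Psi_step (S : {set 'I_n}) (p' : 'I_n -> R) (i : 'I_n) : Good S p' ->
  Psi S p' <= 1 + (p' i * Psi (i |: S) (upd p' i true) +
                   (1 - p' i) * Psi (i |: S) (upd p' i false)).
Proof.
move=> HG; have Hb := G_bnd HG.
have [j0 ij0] := Hcov i.
have tS' : forall j, touched (i |: S) j = (j == j0) || touched S j.
  move=> j; rewrite touched_U1; congr (_ || _).
  by apply/idP/eqP => [h|->]; [exact: mem_disj h ij0|].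
have qne : forall b j, j != j0 -> q (upd p' i b) j = q p' j.
  move=> b j nj; apply: eq_bigr => k kj; rewrite /upd; case: eqP => // eki.
  by subst k; rewrite (mem_disj kj ij0) eqxx in nj.
pose Q := \prod_(k in T j0 | k != i) p' k.
have q0 : q p' j0 = p' i * Q by rewrite /q (bigD1 i).
have q1 : q (upd p' i true) j0 = Q.
  rewrite /q (bigD1 i) //= /upd eqxx mul1r; apply: eq_bigr => k /andP[_ /negbTE ->].
  by [].
have q2 : q (upd p' i false) j0 = 0 by rewrite /q (bigD1 i) //= /upd eqxx mul0r.
pose Rst := \prod_(j < m | j != j0) (if touched S j then 1 - q p' j else 1).
have HR : forall b, \prod_(j < m | j != j0)
     (if touched (i |: S) j then 1 - q (upd p' i b) j else 1) = Rst.
  move=> b; apply: eq_bigr => j nj; by rewrite tS' (negbTE nj) qne.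
have R0 : 0 <= Rst.
  apply: prodr_ge0 => j _; case: ifP => // _.
  by have /andP[_ h] := q_bnd j Hb; rewrite subr_ge0.
have R1 : Rst <= 1.
  apply: prodr_ile1 => j _; case: ifP => _; last by rewrite lexx ler01.
  by have /andP[h1 h2] := q_bnd j Hb; apply/andP; split; lra.
have t0 : touched (i |: S) j0 by rewrite tS' eqxx.
rewrite /Psi (bigD1 j0) //= [X in _ <= 1 + (_ * (X * _) + _)](bigD1 j0) //=.
rewrite [X in _ <= 1 + (_ + _ * (X * _))](bigD1 j0) //= !HR -/Rst t0 q1 q2.
have /andP[pi0 pi1] := Hb i.
case: (boolP (touched S j0)) => tj.
  have -> : [seq j <- ord | ~~ touched (i |: S) j] = [seq j <- ord | ~~ touched S j].
    apply: eq_filter => j; rewrite tS'; case: eqVneq => [->|] //=; by rewrite tj.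
  rewrite q0; set X := Phi _.
  have -> : p' i * ((1 - Q) * Rst * X) + (1 - p' i) * ((1 - 0) * Rst * X) =
            (1 - p' i * Q) * Rst * X by ring.
  lra.
set L := [seq j <- ord | ~~ touched S j].
have -> : [seq j <- ord | ~~ touched (i |: S) j] = [seq a <- L | a != j0].
  rewrite /L -filter_predI; apply: eq_filter => j /=; by rewrite tS' negb_or.
have qp : q p' j0 = q p j0.
  apply: eq_bigr => k kj; apply: HG.2; apply/negP => kS.
  by move/negP: tj; apply; apply/existsP; exists k; rewrite kj kS.
have Hex : Phi L <= 1 + (1 - q p j0) * Phi [seq a <- L | a != j0].
  apply: Phi_exch.
  - exact: (sorted_filter Rq_trans _ ord_sorted).
  - exact: (filter_uniq _ ord_uniq).
  - by rewrite mem_filter tj mem_ord.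
set X := Phi [seq a <- L | a != j0].
have X0 : 0 <= X by apply: Phi_ge0.
have -> : p' i * ((1 - Q) * Rst * X) + (1 - p' i) * ((1 - 0) * Rst * X) =
          Rst * ((1 - q p j0) * X) by rewrite -qp q0; ring.
have c0 : 0 <= (1 - q p j0) * X.
  by apply: mulr_ge0 => //; have /andP[_ h] := q_bnd j0 p_bnd; rewrite subr_ge0.
have h1 : Rst * Phi L <= Rst * (1 + (1 - q p j0) * X) by apply: ler_wpM2l.
rewrite mul1r.
nra.
Qed.


Lemma Good_upd (S : {set 'I_n}) (p' : 'I_n -> R) i b :
  Good S p' -> Good (i |: S) (upd p' i b).
Proof.
move=> [H1 H2]; split => k; rewrite in_setU1 /upd.
  case: eqP => [_ _|_ /= kS]; last exact: H1.
  by case: b; [right|left].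
by rewrite negb_or => /andP[/negbTE -> kS]; exact: H2.
Qed.

Lemma LB (t : dtree n) : forall (S : {set 'I_n}) (p' : 'I_n -> R), Good S p' ->
  (forall x : input n, agrees S p' x -> dt_correct (dnf T) t S x) ->
  Psi S p' <= E p' (dt_cost (dnf T) (fun _ => (1 : R)) t S).
Proof.
elim: t => [|i t0 IH0 t1 IH1] S p' HG Hc; have Hb := G_bnd HG;
  have Ha := x0_agrees HG.
  rewrite (Psi_det0 HG Ha (Hc _ Ha)).
  by apply: E_ge0 => // x; apply: dt_cost_ge0.
case Hd: (determined (dnf T) S (x0 S p')).
  rewrite (Psi_det0 HG Ha Hd).
  by apply: E_ge0 => // x; apply: dt_cost_ge0.
have Hnd : forall x, agrees S p' x -> determined (dnf T) S x = false.
  move=> x Hx; apply/negbTE/negP => Hdx.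
  by move/negbT: Hd => /negP; apply; apply: det_agree (agree_eq Hx Ha) Hdx.
have -> : E p' (dt_cost (dnf T) (fun _ => (1 : R)) (Node i t0 t1) S) =
  E p' (fun x => 1 + dt_cost (dnf T) (fun _ => (1 : R)) (if x i then t1 else t0) (i |: S) x).
  apply: E_ext_supp => x Hx; by rewrite /= (Hnd x (agree_supp HG Hx)).
rewrite E_add E_const (E_split _ i).
rewrite (@E_upd_ext R n p' i true _ (dt_cost (dnf T) (fun _ => (1 : R)) t1 (i |: S)));
  last by move=> x ->.
rewrite (@E_upd_ext R n p' i false _ (dt_cost (dnf T) (fun _ => (1 : R)) t0 (i |: S)));
  last by move=> x ->.
have /andP[pi0 pi1] := Hb i.
have B1 : p' i * Psi (i |: S) (upd p' i true) <=
          p' i * E (upd p' i true) (dt_cost (dnf T) (fun _ => (1 : R)) t1 (i |: S)).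
  case: (eqVneq (p' i) 0) => [->|nz]; first by rewrite !mul0r.
  apply: ler_wpM2l => //; apply: IH1; first exact: Good_upd.
  move=> x Hax1.
  have xi : x i = true.
    by move: (Hax1 i (setU11 _ _)); rewrite /upd eqxx; case: (x i) => //= /eqP; rewrite oner_eq0.
  have Hax : agrees S p' x.
    move=> k kS; case: (eqVneq k i) => [eki|nki].
      subst k; rewrite xi; case: (HG.1 i kS) => e; last by rewrite e.
      by rewrite e eqxx in nz.
    by have := Hax1 k (setU1r _ kS); rewrite /upd (negbTE nki).
  by have := Hc x Hax; rewrite /= (Hnd x Hax) xi.
have B0 : (1 - p' i) * Psi (i |: S) (upd p' i false) <=
          (1 - p' i) * E (upd p' i false) (dt_cost (dnf T) (fun _ => (1 : R)) t0 (i |: S)).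
  case: (eqVneq (1 - p' i) 0) => [->|nz]; first by rewrite !mul0r.
  apply: ler_wpM2l; first by rewrite subr_ge0.
  apply: IH0; first exact: Good_upd.
  move=> x Hax1.
  have xi : x i = false.
    by move: (Hax1 i (setU11 _ _)); rewrite /upd eqxx; case: (x i) => //= /eqP; rewrite eq_sym oner_eq0.
  have Hax : agrees S p' x.
    move=> k kS; case: (eqVneq k i) => [eki|nki].
      subst k; rewrite xi; case: (HG.1 i kS) => e; first by rewrite e.
      by rewrite e subrr eqxx in nz.
    by have := Hax1 k (setU1r _ kS); rewrite /upd (negbTE nki).
  by have := Hc x Hax; rewrite /= (Hnd x Hax) xi.
have := Psi_step i HG.
lra.
Qed.


Variable k : nat.
Hypothesis Hk : forall j, #|T j| = k.

Definition Pi (j : 'I_m) (x : input n) : R := \prod_(i in T j) (x i)%:R.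
Definition A (l : seq 'I_m) (x : input n) : R := \prod_(u <- l) (1 - Pi u x).

Lemma Pi_val j x : Pi j x = if [forall i in T j, x i] then 1 else 0.
Proof.
case: ifP => [/forallP H|/negbT/forallPn [i]].
  by apply: big1 => i ij; have := implyP (H i) ij => ->.
rewrite negb_imply => /andP[ij /negbTE xi].
by rewrite /Pi (bigD1 i) //= xi mul0r.
Qed.

Lemma A_ge0 l x : 0 <= A l x.
Proof.
by apply: prodr_ge0 => u _; rewrite Pi_val; case: ifP => _; rewrite ?subrr ?subr0 ?ler01.
Qed.

Lemma A_cases l x : A l x = 1 \/ exists2 a, a \in l & [forall i in T a, x i].
Proof.
elim: l => [|a l IH]; first by left; rewrite /A big_nil.
move: IH; rewrite /A => IH; rewrite big_cons Pi_val; case: ifP => h.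
  by right; exists a => //; exact: mem_head.
rewrite subr0 mul1r; case: IH => [->|[b bl hb]]; [by left|right].
by exists b => //; rewrite inE bl orbT.
Qed.

Lemma E_A l : uniq l -> E p (A l) = \prod_(u <- l) (1 - q p u).
Proof.
elim: l => [|a l IH] /=.
  move=> _; rewrite big_nil (@E_ext R n p _ (fun _ => 1)) ?E_const // => x.
  by rewrite /A big_nil.
move=> /andP[anl ul]; rewrite big_cons.
have -> : E p (A (a :: l)) =
    E p (fun x => A l x - A l x * \prod_(i <- enum (T a)) (x i)%:R).
  by apply: E_ext => x; rewrite big_enum /A big_cons /Pi; ring.
rewrite E_sub E_prod_indep ?enum_uniq //.
  by rewrite IH // big_enum /q; ring.
move=> i; rewrite mem_enum => ia x; rewrite /A big_seq [RHS]big_seq.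
apply: eq_bigr => u ul'; congr (1 - _); apply: eq_bigr => j ju.
rewrite /flip ffunE; case: eqP => // eji; subst j.
by have := mem_disj ju ia => eua; rewrite -eua ul' in anl.
Qed.

Definition Lf (l : seq 'I_m) : seq 'I_n := flatten [seq enum (T j) | j <- l].

Lemma Lf_uniq l : uniq l -> uniq (Lf l).
Proof.
elim: l => [|a l IH] //= /andP[anl ul].
rewrite cat_uniq enum_uniq IH // andbT; apply/hasPn => i /flattenP [s' /mapP [u ul' ->]].
rewrite !mem_enum => iu; apply/negP => ia.
by have := mem_disj iu ia => eua; rewrite -eua ul' in anl.
Qed.

Lemma mem_Lf i : i \in Lf ord.
Proof.
have [j ij] := Hcov i; apply/flattenP; exists (enum (T j)).
  by apply: map_f; exact: mem_ord.
by rewrite mem_enum.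
Qed.

Lemma size_Lf : size (Lf ord) = n.
Proof.
have He : Lf ord =i enum 'I_n by move=> i; rewrite mem_Lf mem_enum.
have H := uniq_perm (Lf_uniq ord_uniq) (enum_uniq 'I_n) He.
by rewrite (perm_size H) size_enum_ord.
Qed.

Lemma index_Lf l r a i : uniq l -> a \in take r l -> i \in T a ->
  (index i (Lf l) < r * k)%N.
Proof.
elim: l r => [|b l IH] r //= /andP[bnl ul]; case: r => [|r] //=.
have skb : size (enum (T b)) = k by rewrite -cardE Hk.
rewrite inE => /orP[/eqP ->|al] ia.
  rewrite index_cat mem_enum ia.
  have := index_mem i (enum (T b)); rewrite mem_enum ia skb => h.
  by rewrite mulSn; apply: (leq_trans h); rewrite leq_addr.
have ib : i \in T b = false.
  apply/negP => ib; have := mem_disj ia ib => eab.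
  by rewrite eab in al; rewrite (mem_take al) in bnl.
rewrite index_cat mem_enum ib skb mulSn ltn_add2l.
exact: IH.
Qed.

Hypothesis kpos : (0 < k)%N.
Hypothesis Hn : n = (m * k)%N.

Definition sf (j : 'I_n) : 'I_n := nth j (Lf ord) j.

Lemma sf_inj : injective sf.
Proof.
move=> k1 k2; rewrite /sf (set_nth_default k1 k2) ?size_Lf // => /eqP.
rewrite nth_uniq ?size_Lf ?Lf_uniq ?ord_uniq // => /eqP h.
by apply: val_inj.
Qed.

Definition sNA : {perm 'I_n} := perm sf_inj.

Lemma in_prefix i j : (index i (Lf ord) < j)%N -> i \in Defs.prefix sNA j.
Proof.
move=> h; have hi : (index i (Lf ord) < n)%N.
  by have := index_mem i (Lf ord); rewrite mem_Lf size_Lf.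
apply/imsetP; exists (Ordinal hi); first by rewrite inE.
by rewrite /sNA permE /sf /= nth_index // mem_Lf.
Qed.

Lemma NA_pointwise x :
  \sum_(j < n) (if determined (dnf T) (Defs.prefix sNA j) x then 0 else (1 : R)) <=
  \sum_(j < n) A (take (j %/ k)%N ord) x.
Proof.
apply: ler_sum => j _; case: (A_cases (take (j %/ k)%N ord) x) => [->|[a ha hx]].
  by case: ifP => _; rewrite ?ler01 ?lexx.
suff -> : determined (dnf T) (Defs.prefix sNA j) x by apply: A_ge0.
have Hsub : forall i, i \in T a -> i \in Defs.prefix sNA j.
  move=> i ia; apply: in_prefix; apply: (leq_trans (index_Lf ord_uniq ha ia)).
  exact: leq_trunc_div.
have fx : dnf T x by apply/existsP; exists a.
apply/forallP => y; apply/implyP => /forallP Hy; rewrite fx; apply/eqP/existsP.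
exists a; apply/forallP => i; apply/implyP => ia.
by have := implyP (Hy i) (Hsub i ia) => /eqP ->; exact: (implyP (forallP hx i) ia).
Qed.

Lemma sum_div (g : nat -> R) N m' : N = (m' * k)%N ->
  \sum_(0 <= j < N) g (j %/ k)%N = k%:R * \sum_(0 <= r < m') g r.
Proof.
move=> ->; elim: m' => [|m' IH]; first by rewrite mul0n !big_nil mulr0.
rewrite mulSnr (@big_cat_nat _ _ _ (m' * k)%N) ?leq0n ?leq_addr //= IH big_nat_recr //=.
have -> : \sum_(m' * k <= j < m' * k + k) g (j %/ k)%N = \sum_(0 <= c < k) g m'.
  rewrite -{1}[(m' * k)%N]add0n big_addn addKn; apply: eq_big_nat => c /andP[_ ck].
  by rewrite addnC divnMDl // divn_small // addn0.
by rewrite sumr_const_nat subn0 mulrDr [k%:R * g m']mulr_natl.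
Qed.

Lemma sum_div' (g : nat -> R) N m' : N = (m' * k)%N ->
  \sum_(j < N) g (j %/ k)%N = k%:R * \sum_(r < m') g r.
Proof.
move=> HN; rewrite -(big_mkord (fun _ => true) (fun j => g (j %/ k)%N)).
rewrite -(big_mkord (fun _ => true) g); exact: sum_div.
Qed.

Lemma Phi_sum l : Phi l = \sum_(r < size l) \prod_(u <- take r l) (1 - q p u).
Proof.
elim: l => [|a l IH] /=; first by rewrite big_ord0.
rewrite big_ord_recl /= big_nil IH mulr_sumr; congr (_ + _).
by apply: eq_bigr => r _; rewrite ?lift0 /= add0n big_cons.
Qed.

Lemma NA_bound : E p (fun x =>
   \sum_(j < n) (if determined (dnf T) (Defs.prefix sNA j) x then 0 else (1 : R)))
   <= k%:R * Phi ord.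
Proof.
apply: (le_trans (E_le p_bnd NA_pointwise)).
rewrite (E_sum p (fun (j : nat) => A (take (j %/ k)%N ord))).
have -> : \sum_(j < n) E p (A (take (j %/ k)%N ord)) =
          \sum_(j < n) (fun r => \prod_(u <- take r ord) (1 - q p u)) (j %/ k)%N.
  by apply: eq_bigr => j _; rewrite E_A // take_uniq // ord_uniq.
rewrite (@sum_div' (fun r => \prod_(u <- take r ord) (1 - q p u)) n m Hn).
by rewrite Phi_sum size_sort size_enum_ord.
Qed.

End DNF.

Unset Implicit Arguments.

Theorem lemma1 (R : realType) (n m : nat) (T : 'I_m -> {set 'I_n})
    (p : 'I_n -> R) :
  (0 < m)%N ->
  read_once T ->
  (forall i : 'I_n, exists j : 'I_m, i \in T j) ->
  (forall j : 'I_m, (#|T j| * m)%N = n) ->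
  (forall i : 'I_n, 0 < p i < 1) ->
  exists s : {perm 'I_n},
    forall t : dtree n, adaptive_strategy (dnf T) t ->
      cost_nonadaptive (dnf T) (fun _ => 1) p s
        <= (n%:R / m%:R) * cost_adaptive (dnf T) (fun _ => 1) p t.
Proof.
move=> Hm Hro Hcov Hsz Hp.
case: (posnP n) => [n0|npos].
  exists 1%g => t _.
  have -> : cost_nonadaptive (dnf T) (fun _ => 1) p 1%g = 0.
    apply: big1 => x _; rewrite big1 ?mulr0 // => j _.
    exfalso; have := ltn_ord j; move: (nat_of_ord j) => jj; by rewrite n0.
  have -> : (n%:R : R) = 0 by rewrite n0.
  by rewrite !mul0r.
pose j0 := Ordinal Hm; pose k := #|T j0|.
have Hk : forall j, #|T j| = k.
  move=> j; apply/eqP; rewrite -(eqn_pmul2r Hm) (Hsz j) /k (Hsz j0).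
  by [].
have kpos : (0 < k)%N.
  rewrite lt0n; apply/eqP => k0; have := Hsz j0; rewrite -/k k0 mul0n => n0.
  by rewrite -n0 in npos.
have Hne : forall j, exists i, i \in T j.
  by move=> j; apply/card_gt0P; rewrite Hk.
have Hn : n = (m * k)%N by rewrite -(Hsz j0) mulnC.
exists (sNA p Hro Hcov) => t Ht.
have HLB : Psi T p set0 p <= cost_adaptive (dnf T) (fun _ => 1) p t.
  apply: (LB Hro Hcov Hne Hp); first by split => // k'; rewrite in_set0.
  by move=> x _; exact: Ht.
have tz : forall j, touched T set0 j = false.
  by move=> j; apply/existsP => [[i /andP[_]]]; rewrite in_set0.
have HPsi : Psi T p set0 p = Phi T p (ord T p).
  rewrite /Psi big1 ?mul1r; last by move=> j _; rewrite tz.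
  by rewrite (eq_filter (a2 := predT)) ?filter_predT // => j; rewrite tz.
rewrite HPsi in HLB.
have HNA := NA_bound Hro Hcov Hp Hk kpos Hn.
have -> : (n%:R / m%:R : R) = k%:R.
  by rewrite -(Hsz j0) natrM mulfK // pnatr_eq0 -lt0n.
apply: (le_trans HNA); apply: ler_wpM2l => //; exact: ler0n.
Qed.
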